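(* Let $q\ge 2$ and let $\mathcal{S}$ be an SLP deriving a string $T$ with $|T|\ge q$, and let $\phi$ be a fingerprint function. Let $G$ be the graph constructed from $\mathcal{S}$ as follows. Start with an empty graph whose nodes and edges are keyed by fingerprints. For each rule $X_i=X_lX_r$ of $\mathcal{S}$ with $|X_i|\ge q$, in arbitrary order: let $r=r_{X_i}$; create the node labelled $\phi(r[0:q-2])$ if it does not exist; then for $j=1,\dots,|r|-q+1$, create the node labelled $\phi(r[j:j+q-2])$ if it does not exist, create an edge with label $r[j+q-2]$ from the node labelled $\phi(r[j-1:j+q-3])$ to the node labelled $\phi(r[j:j+q-2])$ (counter $0$) if no edge between these two nodes in this direction exists, and increment the counter of that edge by $occ(X_i)$. Then $G$ is connected.
   Context: For a string $s$, $s[i:j]$ is the substring from position $i$ to $j$ inclusive (0-indexed). An SLP is a set of rules $X_1,\dots,X_n$, each $X_i=a$ ($a$ a character) or $X_i=X_lX_r$ with $l,r<i$; $t_{X_i}$ is the string derived from $X_i$, $|X_i|=|t_{X_i}|$, $T=t_{X_n}$. $occ(X_i)$ is the number of occurrences of $X_i$ in the derivation tree of $X_n$. For $X_i=X_lX_r$ with $|X_i|\ge q$ the relevant substring is $r_{X_i}=t_{X_i}[\max(0,|X_l|-q+1):\min(|X_l|+q-2,|X_i|-1)]$. A fingerprint function maps strings to integers (Rabin–Karp: $\phi(s)=\sum_{k=1}^{|s|}s[k]b^k \bmod p$ for a prime $p$ and random $b\in\mathbb{Z}_p$). Connectedness is in the sense of the underlying undirected graph. *)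

(* Defs.v *)
From mathcomp Require Import all_boot all_algebra.
Set Implicit Arguments. Unset Strict Implicit. Unset Printing Implicit Defensive.

(* Straight-line programs: rule i (0-indexed) is either X_i = a or X_i = X_l X_r *)
Inductive rule (A : Type) := Term of A | Pair of nat & nat.
Arguments Term {A}. Arguments Pair {A}.

Section SLP.
Variable A : eqType.
Implicit Types (S : seq (rule A)) (s : seq A).

Definition ruleAt S i : rule A := nth (Pair 0 0) S i.

Definition slp_wf S : Prop :=
  forall i, i < size S ->
    match ruleAt S i with Term _ => True | Pair l r => l < i /\ r < i end.

Definition slp_exps S : seq (seq A) :=
  foldl (fun acc x => rcons acc (match x with
                                 | Term a => [:: a]
                                 | Pair l r => nth [::] acc l ++ nth [::] acc r end))
        [::] S.

Definition tX S i : seq A := nth [::] (slp_exps S) i.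

Definition slp_text S : seq A := tX S (size S).-1.

(* number of occurrences of node i in the derivation tree rooted at j
   (fuel k; fuel size S suffices for well-formed SLPs) *)
Fixpoint occ_aux S k j i : nat :=
  (j == i) + match k with
             | 0 => 0
             | k'.+1 => match ruleAt S j with
                        | Term _ => 0
                        | Pair l r => occ_aux S k' l i + occ_aux S k' r i end end.

Definition occ S i : nat := occ_aux S (size S) (size S).-1 i.

(* s[i:j], inclusive, 0-indexed *)
Definition sub s i j : seq A := take (j.+1 - i) (drop i s).

(* relevant substring r_{X_i} = t_{X_i}[max(0,|X_l|-q+1) : min(|X_l|+q-2, |X_i|-1)] *)
Definition relevant S q i : seq A :=
  match ruleAt S i with
  | Term _ => [::]
  | Pair l r =>
      sub (tX S i) ((size (tX S l)).+1 - q)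
          (minn (size (tX S l) + q - 2) (size (tX S i)).-1)
  end.

(* graph with nodes and directed edges keyed by fingerprints;
   an edge carries a label (the character r[j+q-2]) and a counter *)
Record fgraph := FGraph {
  gnode : int -> bool;
  gedge : int -> int -> option (option A * nat) }.

Definition empty_graph : fgraph := FGraph (fun _ => false) (fun _ _ => None).

Definition add_node (g : fgraph) (x : int) : fgraph :=
  FGraph (fun y => (y == x) || gnode g y) (gedge g).

Definition add_edge (g : fgraph) (u v : int) (lab : option A) (c : nat) : fgraph :=
  FGraph (gnode g)
    (fun x y => if (x == u) && (y == v) then
                  Some (match gedge g u v with
                        | Some (l, c0) => (l, c0 + c)
                        | None => (lab, 0 + c) end)
                else gedge g x y).

Definition process_rule S q (phi : seq A -> int) (g : fgraph) (i : nat) : fgraph :=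
  match ruleAt S i with
  | Term _ => g
  | Pair _ _ =>
      if q <= size (tX S i) then
        let r := relevant S q i in
        let g1 := add_node g (phi (sub r 0 (q - 2))) in
        foldl (fun g j =>
                 let u := phi (sub r j.-1 (j.-1 + (q - 2))) in
                 let v := phi (sub r j (j + (q - 2))) in
                 add_edge (add_node g v) u v (onth r (j + (q - 2))) (occ S i))
              g1 (iota 1 ((size r).+1 - q))
      else g
  end.

Definition build_graph S q (phi : seq A -> int) (ord : seq nat) : fgraph :=
  foldl (process_rule S q phi) empty_graph ord.

Definition uadj (g : fgraph) : rel int :=
  fun u v => isSome (gedge g u v) || isSome (gedge g v u).

Definition gconnected (g : fgraph) : Prop :=
  forall x y, gnode g x -> gnode g y ->
    exists p : seq int, path (uadj g) x p /\ last x p = y.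

End SLP.

(* Main.v *)
Require Import Defs.
From mathcomp Require Import all_boot all_algebra.
From mathcomp Require Import zify.
Set Implicit Arguments. Unset Strict Implicit. Unset Printing Implicit Defensive.

Section L.
Variable T : Type.
Implicit Types s u v w : seq T.

Lemma take_drop_cat m a s s' : a + m <= size s ->
  take m (drop a (s ++ s')) = take m (drop a s).
Proof.
case: m => [|m] h; first by rewrite !take0.
rewrite drop_cat ifT; last lia.
rewrite take_cat size_drop; case: ltnP => h2 //.
have -> : m.+1 = size s - a by lia.
by rewrite subnn take0 cats0 take_oversize // size_drop.
Qed.

Lemma drop_cat_ge a s s' : size s <= a -> drop a (s ++ s') = drop (a - size s) s'.
Proof. by move=> h; rewrite drop_cat ltnNge h. Qed.

Lemma win_mid m u w v c : c + m <= size w ->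
  take m (drop (size u + c) (u ++ w ++ v)) = take m (drop c w).
Proof.
move=> h; rewrite drop_cat_ge ?leq_addr // addKn take_drop_cat //.
Qed.

Lemma win_sub m K st c s : 0 < m -> c + m <= size (take K (drop st s)) ->
  take m (drop c (take K (drop st s))) = take m (drop (st + c) s)
  /\ st + c + m <= size s.
Proof.
move=> m0 h.
have hst : st < size s.
  move: h; rewrite size_take_min size_drop; lia.
have E : s = take st s ++ take K (drop st s) ++ drop K (drop st s).
  by rewrite !cat_take_drop.
have Hs : size (take st s) = st by rewrite size_takel // ltnW.
split.
  have -> : take m (drop (st + c) s) = take m (drop (size (take st s) + c)
    (take st s ++ take K (drop st s) ++ drop K (drop st s))) by rewrite Hs -E.
  by rewrite win_mid.
rewrite [in X in _ <= X]E !size_cat Hs; lia.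
Qed.

Lemma foldl_inv_in (R : Type) (U : eqType) (F : R -> U -> R) (P : R -> Prop) (s : seq U) (Q : U -> Prop) :
  (forall x, x \in s -> Q x) ->
  (forall g x, Q x -> P g -> P (F g x)) -> forall g, P g -> P (foldl F g s).
Proof.
elim: s => [|x s IH] //= hin hF g hg; apply: IH => //.
  by move=> y hy; apply: hin; rewrite in_cons hy orbT.
by apply: hF => //; apply: hin; rewrite in_cons eqxx.
Qed.

Lemma foldl_mem (R : Type) (U : eqType) (F : R -> U -> R) (P : R -> Prop) x :
  (forall g y, P g -> P (F g y)) -> (forall g, P (F g x)) ->
  forall (l : seq U) g, x \in l -> P (foldl F g l).
Proof.
move=> hk hx; elim => [|y l IH] g //=; rewrite in_cons => /orP [/eqP <-|h].
  by apply: (foldl_inv_in (Q := fun _ => True)) => // g' z _; apply: hk.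
by apply: IH.
Qed.
End L.

Section S.
Variable A : eqType.
Implicit Types (S : seq (rule A)).

Definition stepF (acc : seq (seq A)) (x : rule A) :=
  rcons acc (match x with
             | Term a => [:: a]
             | Pair l r => nth [::] acc l ++ nth [::] acc r end).

Lemma size_fold (s : seq (rule A)) acc : size (foldl stepF acc s) = size acc + size s.
Proof.
elim: s acc => [|x s IH] acc; first by rewrite addn0.
by rewrite /= IH /stepF size_rcons addSnnS.
Qed.

Lemma nth_fold (s : seq (rule A)) acc j : j < size acc ->
  nth [::] (foldl stepF acc s) j = nth [::] acc j.
Proof.
elim: s acc => [|x s IH] acc //= h.
rewrite IH; last by rewrite /stepF size_rcons ltnS ltnW.
by rewrite /stepF nth_rcons h.
Qed.

Lemma tX_split S i : i < size S ->
  tX S i = (match ruleAt S i with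
             | Term a => [:: a]
             | Pair l r => nth [::] (slp_exps (take i S)) l ++ nth [::] (slp_exps (take i S)) r end)
  /\ forall j, j < i -> tX S j = nth [::] (slp_exps (take i S)) j.
Proof.
move=> hi.
have HS : S = take i S ++ ruleAt S i :: drop i.+1 S.
  by rewrite /ruleAt -drop_nth // cat_take_drop.
have Hsz : size (slp_exps (take i S)) = i.
  by rewrite /slp_exps -/stepF size_fold size_takel // ltnW.
rewrite /tX.
have -> : slp_exps S = foldl stepF (stepF (slp_exps (take i S)) (ruleAt S i)) (drop i.+1 S).
  by rewrite {1}HS /slp_exps foldl_cat.
split.
  rewrite nth_fold; last by rewrite /stepF size_rcons Hsz.
  by rewrite /stepF nth_rcons Hsz ltnn eqxx.
move=> j hj; rewrite nth_fold; last by rewrite /stepF size_rcons Hsz ltnS ltnW.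
by rewrite /stepF nth_rcons Hsz hj.
Qed.

Lemma tX_pair S i l r : i < size S -> ruleAt S i = Pair l r -> l < i -> r < i ->
  tX S i = tX S l ++ tX S r.
Proof.
move=> hi E hl hr; have [-> H] := tX_split hi.
by rewrite E !H.
Qed.

Lemma tX_term S i a : i < size S -> ruleAt S i = Term a -> tX S i = [:: a].
Proof. by move=> hi E; have [-> H] := tX_split hi; rewrite E. Qed.

Lemma occ_infix S i : slp_wf S -> forall k j, j < size S -> 0 < occ_aux S k j i ->
  exists u v, tX S j = u ++ tX S i ++ v.
Proof.
move=> wf; elim => [|k IH] j hj /=.
  case: (eqVneq j i) => [->|//]; by exists [::], [::]; rewrite cats0.
case: (eqVneq j i) => [->|ne]; first by exists [::], [::]; rewrite cats0.
rewrite add0n.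
have := wf j hj.
case E: (ruleAt S j) => [a|l r] //= [hl hr].
rewrite addn_gt0 => /orP [h|h].
  have [u [v Hu]] := IH l (ltn_trans hl hj) h.
  exists u, (v ++ tX S r); by rewrite (tX_pair hj E hl hr) Hu -!catA.
have [u [v Hu]] := IH r (ltn_trans hr hj) h.
exists (tX S l ++ u), v; by rewrite (tX_pair hj E hl hr) Hu -!catA.
Qed.

End S.

Section M.
Variable A : eqType.
Variables (q : nat) (S : seq (rule A)) (phi : seq A -> int) (ord : seq nat).
Hypothesis hq : 2 <= q.
Hypothesis wf : slp_wf S.
Hypothesis hocc : forall i, i < size S -> 0 < occ S i.
Hypothesis hT : q <= size (slp_text S).
Hypothesis hperm : perm_eq ord (iota 0 (size S)).

Definition win (s : seq A) a := take (q - 1) (drop a s).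
Definition good (x : int) := exists a, a + (q - 1) <= size (slp_text S) /\ x = phi (win (slp_text S) a).

Lemma n_pos : 0 < size S.
Proof.
move: hT; case: (posnP (size S)) => // /size0nil E.
by rewrite /slp_text /tX E /=; lia.
Qed.

Lemma good_ti i c : i < size S -> c + (q - 1) <= size (tX S i) -> good (phi (win (tX S i) c)).
Proof.
move=> hi hc.
have [u [v E]] := occ_infix wf (ltac:(by rewrite ltn_predL n_pos) : (size S).-1 < size S) (hocc hi).
have E' : slp_text S = u ++ tX S i ++ v by [].
exists (size u + c); split.
  rewrite E' !size_cat; lia.
by rewrite /win E' win_mid.
Qed.

Lemma sub_win s x : sub s x (x + (q - 2)) = win s x.
Proof. rewrite /sub /win; congr take; lia. Qed.

Lemma size_ti i l r : i < size S -> ruleAt S i = Pair l r ->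
  size (tX S i) = size (tX S l) + size (tX S r).
Proof.
move=> hi E; have := wf hi; rewrite E => -[hl hr].
by rewrite (tX_pair hi E hl hr) size_cat.
Qed.

Lemma good_r i l r j : i < size S -> ruleAt S i = Pair l r -> q <= size (tX S i) ->
  j + (q - 1) <= size (relevant S q i) -> good (phi (win (relevant S q i) j)).
Proof.
move=> hi E hqi; rewrite /relevant E /sub => hj.
have [h1 h2] := win_sub (ltac:(lia) : 0 < q - 1) hj.
rewrite /win h1; apply: good_ti => //; lia.
Qed.

Lemma size_r i l r : i < size S -> ruleAt S i = Pair l r -> q <= size (tX S i) ->
  q - 1 <= size (relevant S q i).
Proof.
move=> hi E hqi; have := size_ti hi E.
rewrite /relevant E /sub size_take_min size_drop => hs.
lia.
Qed.


Lemma proc_nodes g i : i < size S -> (forall x, gnode g x -> good x) ->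
  forall x, gnode (process_rule S q phi g i) x -> good x.
Proof.
move=> hi hg; rewrite /process_rule.
case E: (ruleAt S i) => [a|l r] //; case: ifP => hqi //.
apply: (foldl_inv_in (P := fun g => forall x, gnode g x -> good x)
         (Q := fun j => j \in iota 1 ((size (relevant S q i)).+1 - q))) => //.
  move=> g' j hj hg' x /= /orP [/eqP ->|]; last exact: hg'.
  rewrite sub_win; apply: (good_r hi E hqi).
  move: hj; rewrite mem_iota; lia.
move=> x /= /orP [/eqP ->|]; last exact: hg.
rewrite (_ : q - 2 = 0 + (q - 2)) // sub_win.
apply: (good_r hi E hqi); rewrite add0n; exact: (size_r hi E hqi).
Qed.

Lemma nodes_good x : gnode (build_graph S q phi ord) x -> good x.
Proof.
rewrite /build_graph; move: x.
apply: (foldl_inv_in (P := fun g => forall x, gnode g x -> good x) (Q := fun i => i < size S)) => //.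
  by move=> i; rewrite (perm_mem hperm) mem_iota.
move=> g i hi hg; exact: proc_nodes.
Qed.

Lemma keep_proc u v g i : isSome (gedge g u v) -> isSome (gedge (process_rule S q phi g i) u v).
Proof.
rewrite /process_rule; case: (ruleAt S i) => [a|l r] // h; case: ifP => // _.
apply: (foldl_inv_in (P := fun g => isSome (gedge g u v)) (Q := fun _ => True)) => //=.
by move=> g' j _ h'; case: ifP.
Qed.


Lemma edgeT i : i < size S -> forall a, a + q <= size (tX S i) ->
  isSome (gedge (build_graph S q phi ord) (phi (win (tX S i) a)) (phi (win (tX S i) a.+1))).
Proof.
elim/ltn_ind: i => i IH hi a ha.
have := wf hi; case E: (ruleAt S i) => [z|l r].
  by move=> _; move: ha; rewrite (tX_term hi E) /=; lia.
move=> [hl hr]; have Ht := tX_pair hi E hl hr.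
have Hs : size (tX S i) = size (tX S l) + size (tX S r) by rewrite Ht size_cat.
case: (leqP (a + q) (size (tX S l))) => h1.
  have W : forall b, b + (q - 1) <= size (tX S l) -> win (tX S i) b = win (tX S l) b.
    by move=> b hb; rewrite /win Ht take_drop_cat.
  rewrite !W; try lia.
  exact: (IH l hl (ltn_trans hl hi) a h1).
case: (leqP (size (tX S l)) a) => h2.
  have W : forall b, size (tX S l) <= b -> win (tX S i) b = win (tX S r) (b - size (tX S l)).
    by move=> b hb; rewrite /win Ht drop_cat_ge.
  rewrite !W; try lia.
  rewrite subSn //; apply: (IH r hr (ltn_trans hr hi)); lia.
set U := phi (win (tX S i) a); set V := phi (win (tX S i) a.+1).
rewrite /build_graph.
apply: (foldl_mem (P := fun g => isSome (gedge g U V)) (x := i)).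
- by move=> g y; exact: keep_proc.
- move=> g; rewrite /process_rule E ifT; last lia.
  simpl.
  set st := (size (tX S l)).+1 - q.
  have Hr : forall c, c + (q - 1) <= size (relevant S q i) ->
      win (relevant S q i) c = win (tX S i) (st + c).
    move=> c hc; have := hc; rewrite {1}/relevant E /sub => hc'.
    have [h3 _] := win_sub (ltac:(lia) : 0 < q - 1) hc'.
    by rewrite /win /relevant E /sub h3.
  have hsz : (a - st).+1 + (q - 1) <= size (relevant S q i).
    rewrite /relevant E /sub size_take_min size_drop /st; lia.
  apply: (foldl_mem (P := fun g => isSome (gedge g U V)) (x := (a - st).+1)).
  + by move=> g' y h /=; case: ifP.
  + move=> g' /=.
    rewrite !sub_win !Hr; try lia.
    have -> : st + (a - st) = a by rewrite /st; lia.
    have -> : st + (a - st).+1 = a.+1 by rewrite /st; lia.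
    by rewrite /U /V !eqxx.
  + by rewrite mem_iota; lia.
- by rewrite (perm_mem hperm) mem_iota.
Qed.


Definition conn (g : Defs.fgraph A) x y := exists p, path (uadj g) x p /\ last x p = y.

Lemma conn_trans (g : Defs.fgraph A) x y z : conn g x y -> conn g y z -> conn g x z.
Proof.
move=> [p1 [h1 e1]] [p2 [h2 e2]]; exists (p1 ++ p2).
by rewrite cat_path last_cat e1 h1 h2.
Qed.

Lemma conn_adj (g : Defs.fgraph A) x y : uadj g x y -> conn g x y.
Proof. by move=> h; exists [:: y]; rewrite /= h. Qed.

Lemma uadjC (g : Defs.fgraph A) x y : uadj g x y = uadj g y x.
Proof. by rewrite /uadj orbC. Qed.

Lemma conn_wins0 a : a + (q - 1) <= size (slp_text S) ->
  conn (build_graph S q phi ord) (phi (win (slp_text S) 0)) (phi (win (slp_text S) a))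
  /\ conn (build_graph S q phi ord) (phi (win (slp_text S) a)) (phi (win (slp_text S) 0)).
Proof.
elim: a => [|a IH] h; first by split; exists [::].
have [c1 c2] := IH (ltac:(lia)).
have he := edgeT (ltac:(by rewrite ltn_predL n_pos) : (size S).-1 < size S) (a := a) (ltac:(rewrite -/(slp_text S); lia)).
have hu : uadj (build_graph S q phi ord) (phi (win (slp_text S) a)) (phi (win (slp_text S) a.+1)).
  by rewrite /uadj he.
split; first exact: conn_trans c1 (conn_adj hu).
by apply: conn_trans c2; apply: conn_adj; rewrite uadjC.
Qed.

Lemma main_conn : gconnected (build_graph S q phi ord).
Proof.
move=> x y /nodes_good [a [ha ->]] /nodes_good [b [hb ->]].
have [_ c1] := conn_wins0 ha; have [c2 _] := conn_wins0 hb.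
exact: conn_trans c1 c2.
Qed.

End M.

Theorem lemma7 (A : eqType) (q : nat) (S : seq (rule A)) (phi : seq A -> int)
    (ord : seq nat) :
  2 <= q ->
  slp_wf S ->
  (forall i, i < size S -> 0 < occ S i) ->
  q <= size (slp_text S) ->
  perm_eq ord (iota 0 (size S)) ->
  gconnected (build_graph S q phi ord).
Proof. move=> *; exact: main_conn. Qed.
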